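(* Let $m\le n$, $K\in\{0,\ldots,m-1\}$, $\gamma>0$, $\mathcal{C}\subset\mathrm{dom} f\subset\mathbb{R}^{m\times n}$, and consider $$\min_{X\in\mathbb{R}^{m\times n}}\ f(X)+\gamma\mathcal{T}_K(X)+\delta_{\mathcal C}(X),$$ where $f+\delta_{\mathcal C}$ is directionally differentiable. Let $X^*$ be a d-stationary point. Suppose: (C1) every $X\in\mathcal C$ has a singular value decomposition $X=U[\mathrm{diag}(\sigma_1(X),\ldots,\sigma_m(X)),0]V^\top$ ($U,V$ orthogonal) such that $-U[\mathrm{diag}(0,\ldots,0,\sigma_{K+1}(X),\ldots,\sigma_m(X)),0]V^\top\in\mathcal{F}(X;\mathcal C)$; (C2) there is $\Gamma$ with $(f+\delta_{\mathcal C})'(X^*;D)\le\Gamma$ for all $D\in\mathcal{F}(X^*;\mathcal C)$ with $\|D\|_*=1$. If $\gamma>\Gamma$, then $\mathcal{T}_K(X^* )=0$, i.e., $\mathrm{rank}(X^* )\le K$.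
   Context: Truncated nuclear norm: $\mathcal{T}_K(X)=\sum_{i=K+1}^{\min\{m,n\}}\sigma_i(X)$, where $\sigma_i(X)$ is the $i$-th largest singular value. $\|D\|_*$ is the nuclear norm (sum of singular values). $\delta_{\mathcal C}$ is the indicator of $\mathcal C$; $\mathrm{dom} f=\{X\mid f(X)<\infty\}$. Feasible cone $\mathcal{F}(X;\mathcal{C})=\{D\mid \exists\varsigma'>0:\ X+\varsigma D\in\mathcal{C}\ \forall\varsigma\in(0,\varsigma')\}$ for $X\in\mathcal C$. Directional derivative $h'(X;D)=\lim_{\varsigma\searrow0}(h(X+\varsigma D)-h(X))/\varsigma$, assumed to exist in $\mathbb{R}$ for feasible directions. $X^*$ is d-stationary if the objective's directional derivative at $X^*$ is $\ge0$ for all $D\in\mathcal{F}(X^*;\mathcal C)$. *)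

(* Defs.v *)
From HB Require Import structures.
From Stdlib Require Import ClassicalEpsilon.
From mathcomp Require Import all_boot all_order all_algebra.
From mathcomp Require Import all_classical all_reals all_analysis.
Set Implicit Arguments. Unset Strict Implicit. Unset Printing Implicit Defensive.
Import Order.TTheory GRing.Theory Num.Theory.
Import numFieldNormedType.Exports.
Local Open Scope classical_set_scope.
Local Open Scope ring_scope.

Section Defs.
Variable R : realType.

Definition orthogonal_mx (k : nat) (U : 'M[R]_k) : Prop := U^T *m U = 1%:M.

Definition rdiag (m n : nat) (s : 'I_m -> R) : 'M[R]_(m, n) :=
  \matrix_(i < m, j < n) (if (i : nat) == (j : nat) then s i else 0).

Definition is_svd (m n : nat) (X : 'M[R]_(m, n)) (U : 'M[R]_m) (V : 'M[R]_n)
    (s : 'I_m -> R) : Prop :=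
  [/\ orthogonal_mx U, orthogonal_mx V,
      (forall i, 0 <= s i),
      (forall i j : 'I_m, (i <= j)%N -> s j <= s i) &
      X = U *m rdiag n s *m V^T].

(* singular values sigma_1(X) >= ... >= sigma_m(X), 0-indexed:
   sigma X i = sigma_{i+1}(X). They are the diagonal of any SVD of X
   (SVDs exist and the diagonal is unique; chosen by Hilbert's epsilon). *)
Definition sing_vals (m n : nat) (X : 'M[R]_(m, n)) : 'I_m -> R :=
  epsilon (inhabits (fun _ : 'I_m => 0))
    (fun s => exists U V, is_svd X U V s).

Definition nuc_norm (m n : nat) (X : 'M[R]_(m, n)) : R :=
  \sum_(i < m) sing_vals X i.

Definition trunc_nuc (K m n : nat) (X : 'M[R]_(m, n)) : R :=
  \sum_(i < m | (K <= i)%N) sing_vals X i.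

Definition ind_set (T : Type) (C : set T) (X : T) : \bar R :=
  if `[< C X >] then 0%E else +oo%E.

Definition edom (T : Type) (f : T -> \bar R) : set T := [set X | (f X < +oo)%E].

Definition feas_cone (m n : nat) (C : set 'M[R]_(m, n)) (X : 'M[R]_(m, n)) :
    set 'M[R]_(m, n) :=
  [set D | exists2 e : R, 0 < e & forall t : R, 0 < t < e -> C (X + t *: D)].

Definition is_dirder (m n : nat) (h : 'M[R]_(m, n) -> \bar R)
    (X D : 'M[R]_(m, n)) (l : R) : Prop :=
  ((fun t : R => ((h (X + t *: D)%R - h X) * (t^-1)%:E)%E) @ 0^'+ --> l%:E)%E.

End Defs.
Arguments ind_set R {T} C X.

(* Main.v *)
Require Import Defs.
From HB Require Import structures.
From Stdlib Require Import ClassicalEpsilon.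
From mathcomp Require Import all_boot all_order all_algebra.
From mathcomp Require Import all_classical all_reals all_analysis.
Import Order.TTheory GRing.Theory Num.Theory.
Import numFieldNormedType.Exports.
Local Open Scope classical_set_scope.
Local Open Scope ring_scope.

Lemma char_poly_conj (R : comNzRingType) k (P Q A : 'M[R]_k) :
  Q *m P = 1%:M -> char_poly (P *m A *m Q) = char_poly A.
Proof.
move=> QP; have PQ := mulmx1C QP.
rewrite /char_poly /char_poly_mx !map_mxM.
have eX : ('X%:M : 'M[{poly R}]_k) =
   map_mx polyC P *m 'X%:M *m map_mx polyC Q.
  by rewrite scalar_mxC -mulmxA -map_mxM PQ map_mx1 mulmx1.
rewrite {1}eX -mulmxBl -mulmxBr !det_mulmx mulrC mulrA -det_mulmx.
by rewrite -map_mxM QP map_mx1 det1 mul1r.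
Qed.

Lemma orth_r {R : realType} {k : nat} (U : 'M[R]_k) : orthogonal_mx U -> U *m U^T = 1%:M.
Proof. by move=> h; apply: mulmx1C. Qed.

Lemma rdiag_entry {R : realType} {m n : nat} (mn : (m <= n)%N) (s : 'I_m -> R) (i : 'I_m) (j : 'I_n) :
  rdiag n s i j = if j == widen_ord mn i then s i else 0.
Proof. by rewrite /rdiag mxE -val_eqE /= eq_sym. Qed.
Arguments rdiag_entry {R m n}.

Lemma svd_entry {R : realType} {m n : nat} (mn : (m <= n)%N) (U : 'M[R]_m) (V : 'M[R]_n)
   (s : 'I_m -> R) i j :
  (U *m rdiag n s *m V^T) i j = \sum_(k < m) U i k * s k * V j (widen_ord mn k).
Proof.
rewrite mxE (eq_bigr (fun l => \sum_(k < m) (U i k * (if l == widen_ord mn k then s k else 0)) * V j l)); last first.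
  by move=> l _; rewrite !mxE mulr_suml; apply: eq_bigr => k _; rewrite (rdiag_entry mn) eq_sym.
rewrite exchange_big /=; apply: eq_bigr => k _.
rewrite (bigD1 (widen_ord mn k)) //= eqxx big1 ?addr0 // => l /negbTE ->.
by rewrite mulr0 mul0r.
Qed.

Lemma rdiag_rdiagT {R : realType} {m n : nat} (mn : (m <= n)%N) (s : 'I_m -> R) :
  rdiag n s *m (rdiag n s)^T = diag_mx (\row_i (s i ^+ 2)).
Proof.
apply/matrixP => i k; rewrite !mxE.
rewrite (bigD1 (widen_ord mn i)) //= big1 ?addr0; last first.
  move=> l /negbTE hl; rewrite !mxE.
  have -> : ((i : nat) == l) = false by rewrite eq_sym -hl -val_eqE.
  by rewrite mul0r.
rewrite !mxE /= eqxx.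
case: (eqVneq i k) => [->|nik]; first by rewrite eqxx expr2.
by rewrite ifN ?mulr0 ?mulr0n // val_eqE eq_sym.
Qed.

Lemma svd_char {R : realType} {m n : nat} (mn : (m <= n)%N) (U : 'M[R]_m) (V : 'M[R]_n)
   (s : 'I_m -> R) :
  orthogonal_mx U -> orthogonal_mx V ->
  let X := U *m rdiag n s *m V^T in
  char_poly (X *m X^T) = \prod_(x <- [seq s i ^+ 2 | i <- enum 'I_m]) ('X - x%:P).
Proof.
move=> oU oV X.
have -> : X *m X^T = U *m diag_mx (\row_i (s i ^+ 2)) *m U^T.
  rewrite /X !trmx_mul trmxK -(rdiag_rdiagT mn) !mulmxA; congr (_ *m _).
  by rewrite -!mulmxA; congr (_ *m _); rewrite [V^T *m _]mulmxA oV mul1mx.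
rewrite char_poly_conj ?oU // char_poly_trig ?diag_mx_is_trig //.
by rewrite big_map big_enum /=; apply: eq_bigr => i _; rewrite !mxE eqxx mulr1n.
Qed.

Lemma svd_perm {R : realType} {m n : nat} (mn : (m <= n)%N) (U U' : 'M[R]_m) (V V' : 'M[R]_n)
   (s s' : 'I_m -> R) :
  orthogonal_mx U -> orthogonal_mx V -> orthogonal_mx U' -> orthogonal_mx V' ->
  U *m rdiag n s *m V^T = U' *m rdiag n s' *m V'^T -> (forall i, 0 <= s' i) ->
  perm_eq [seq `|s i| | i <- enum 'I_m] [seq s' i | i <- enum 'I_m].
Proof.
move=> oU oV oU' oV' eX s'0.
have := svd_char mn U V s oU oV; rewrite /= eX (svd_char mn U' V' s' oU' oV') => /prod_XsubC_eq.
move=> /(perm_map (fun x : R => Num.sqrt x)); rewrite -!map_comp perm_sym.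
congr perm_eq; apply: eq_map => i /=; rewrite sqrtr_sqr //.
by rewrite ger0_norm.
Qed.

Lemma svd_exists {R : realType} {m n : nat} (mn : (m <= n)%N) (U : 'M[R]_m) (V : 'M[R]_n)
   (s : 'I_m -> R) :
  orthogonal_mx U -> orthogonal_mx V ->
  exists U' V' s', is_svd (U *m rdiag n s *m V^T) U' V' s'.
Proof.
move=> oU oV.
have oU1 := oU; have oV1 := oV; rewrite /orthogonal_mx in oU1 oV1.
pose leT := fun i j : 'I_m => `|s j| <= `|s i|.
pose r := sort leT (enum 'I_m).
have sz : size r = m by rewrite size_sort size_enum_ord.
have ur : uniq r by rewrite sort_uniq enum_uniq.
have sr : sorted leT r.
  apply: sort_sorted => i j; rewrite /leT; exact: le_total.
pose p := fun k : 'I_m => nth k r k.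
have pinj : injective p.
  move=> k l; rewrite /p => h.
  have hk : (k < size r)%N by rewrite sz.
  have hl : (l < size r)%N by rewrite sz.
  apply: val_inj; apply/eqP; rewrite -(nth_uniq k hk hl ur) h.
  by rewrite (set_nth_default k l hl).
have psort : forall i j : 'I_m, (i <= j)%N -> `|s (p j)| <= `|s (p i)|.
  move=> i j ij; rewrite /p (set_nth_default i j) ?sz //.
  apply: (sorted_leq_nth _ _ i sr) => //; rewrite ?inE ?sz //.
  - by move=> a b c; rewrite /leT => h1 h2; exact: le_trans h2 h1.
  - by move=> a; rewrite /leT.
pose sg := fun k : 'I_m => if s (p k) < 0 then -1 else 1 : R.
have sg2 : forall k2, sg k2 * sg k2 = 1.
  by move=> k2; rewrite /sg; case: ifP => _; rewrite ?mulrNN mulr1.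
have sgs : forall k, sg k * `|s (p k)| = s (p k).
  move=> k; rewrite /sg; case: ifP => h.
    by rewrite ltr0_norm // mulNr mul1r opprK.
  by rewrite mul1r ger0_norm // leNgt h.
pose pe := fun j : 'I_n => if insub (val j) is Some k then widen_ord mn (p k) else j.
have pew : forall k, pe (widen_ord mn k) = widen_ord mn (p k).
  move=> k; rewrite /pe; case: insubP => [k0 _ e|]; last by rewrite /= ltn_ord.
  by rewrite (val_inj e).
have peinj : injective pe.
  move=> j l; rewrite /pe.
  case: insubP => [k0 kl jk|jm]; case: insubP => [k1 kl1 lk1|lm] //=.
  - move=> /(congr1 val) /= /val_inj /pinj hk.
    by apply: val_inj; rewrite -jk -lk1 hk.
  - by move=> ej; move: lm; rewrite -ej /= ltn_ord.
  - by move=> ej; move: jm; rewrite ej /= ltn_ord.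
pose U' := \matrix_(i < m, k < m) (sg k * U i (p k)).
pose V' := \matrix_(i < n, j < n) V i (pe j).
exists U', V', (fun k => `|s (p k)|); split.
- apply/matrixP => k l; rewrite !mxE.
  have e : forall i, U'^T k i * U' i l = sg k * sg l * (U i (p k) * U i (p l)).
    by move=> i; rewrite !mxE; rewrite mulrACA.
  rewrite (eq_bigr _ (fun i _ => e i)) -mulr_sumr.
  have e2 : \sum_i U i (p k) * U i (p l) = (U^T *m U) (p k) (p l).
    by rewrite mxE; apply: eq_bigr => i _; rewrite mxE.
  rewrite e2 oU1 mxE.
  case: (eqVneq k l) => [->|kl]; first by rewrite eqxx sg2 mulr1.
  by rewrite (inj_eq pinj) (negbTE kl) mulr0.
- apply/matrixP => j l; rewrite !mxE.
  have e : forall i, V'^T j i * V' i l = V^T (pe j) i * V i (pe l).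
    by move=> i; rewrite !mxE.
  rewrite (eq_bigr _ (fun i _ => e i)).
  have e2 : \sum_i V^T (pe j) i * V i (pe l) = (V^T *m V) (pe j) (pe l).
    by rewrite mxE.
  rewrite e2 oV1 mxE.
  by rewrite (inj_eq peinj).
- by move=> i.
- exact: psort.
- apply/matrixP => i j; rewrite !(svd_entry mn).
  rewrite (reindex_inj pinj) /=; apply: eq_bigr => k _.
  by rewrite !mxE pew -{1}(sgs k) mulrCA !mulrA.
Qed.

Lemma sv_svd {R : realType} {m n : nat} (mn : (m <= n)%N) (U : 'M[R]_m) (V : 'M[R]_n)
   (s : 'I_m -> R) :
  orthogonal_mx U -> orthogonal_mx V ->
  exists U' V', is_svd (U *m rdiag n s *m V^T) U' V' (sing_vals (U *m rdiag n s *m V^T)).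
Proof.
move=> oU oV; rewrite /sing_vals.
apply: (epsilon_spec _ (fun s0 => exists U1 V1, is_svd (U *m rdiag n s *m V^T) U1 V1 s0)).
have [U' [V' [s' h]]] := svd_exists mn _ _ s oU oV.
by exists s', U', V'.
Qed.

Lemma sv_perm {R : realType} {m n : nat} (mn : (m <= n)%N) (U : 'M[R]_m) (V : 'M[R]_n)
   (s : 'I_m -> R) :
  orthogonal_mx U -> orthogonal_mx V ->
  perm_eq [seq `|s i| | i <- enum 'I_m]
          [seq sing_vals (U *m rdiag n s *m V^T) i | i <- enum 'I_m].
Proof.
move=> oU oV; have [U' [V' [oU' oV' h0 _ eX]]] := sv_svd mn _ _ s oU oV.
exact: (svd_perm mn _ _ _ _ _ _ oU oV oU' oV' eX h0).
Qed.

Lemma sorted_ord {R : realType} {m : nat} (s : 'I_m -> R) :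
  (forall i j : 'I_m, (i <= j)%N -> s j <= s i) ->
  sorted (fun a b => b <= a) [seq s i | i <- enum 'I_m].
Proof.
move=> hs; rewrite sorted_map.
have : sorted (relpre val leq) (enum 'I_m) by rewrite -sorted_map val_enum_ord iota_sorted.
by apply: sub_sorted => i j /= ij; apply: hs.
Qed.

Lemma sv_eq {R : realType} {m n : nat} (mn : (m <= n)%N) (U : 'M[R]_m) (V : 'M[R]_n)
   (s : 'I_m -> R) :
  orthogonal_mx U -> orthogonal_mx V ->
  (forall i, 0 <= s i) -> (forall i j : 'I_m, (i <= j)%N -> s j <= s i) ->
  forall i, sing_vals (U *m rdiag n s *m V^T) i = s i.
Proof.
move=> oU oV s0 ss.
have [U' [V' [oU' oV' h0 h1 eX]]] := sv_svd mn _ _ s oU oV.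
have := sv_perm mn _ _ s oU oV.
have -> : [seq `|s i| | i <- enum 'I_m] = [seq s i | i <- enum 'I_m].
  by apply: eq_map => i; rewrite ger0_norm.
have tr : transitive (fun a b : R => b <= a).
  by move=> a b c h1' h2'; apply: le_trans h2' h1'.
have an : antisymmetric (fun a b : R => b <= a).
  by move=> a b /andP [h1' h2']; apply/eqP; rewrite eq_le h1' h2'.
move=> /(sorted_eq tr an (sorted_ord _ ss) (sorted_ord _ h1)) => e.
move/eq_in_map: e => e i; apply/esym/e; by rewrite mem_enum.
Qed.

Lemma sv_sum {R : realType} {m n : nat} (mn : (m <= n)%N) (U : 'M[R]_m) (V : 'M[R]_n)
   (s : 'I_m -> R) :
  orthogonal_mx U -> orthogonal_mx V ->
  \sum_(i < m) sing_vals (U *m rdiag n s *m V^T) i = \sum_(i < m) `|s i|.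
Proof.
move=> oU oV; have h := sv_perm mn _ _ s oU oV.
transitivity (\sum_(x <- [seq sing_vals (U *m rdiag n s *m V^T) i | i <- enum 'I_m]) x).
  by rewrite big_map big_enum.
by rewrite -(perm_big _ h) big_map big_enum.
Qed.

Lemma rank_rdiag {R : realType} {m n : nat} (mn : (m <= n)%N) (U : 'M[R]_m) (V : 'M[R]_n)
   (s : 'I_m -> R) K :
  (forall i : 'I_m, (K <= i)%N -> s i = 0) ->
  (\rank (U *m rdiag n s *m V^T) <= K)%N.
Proof.
move=> hs.
pose A := \matrix_(i < m, k < K) (if (i : nat) == k then s i else 0).
pose B := \matrix_(k < K, j < n) (if (k : nat) == j then 1 else 0 : R).
have eAB : rdiag n s = A *m B.
  apply/matrixP => i j; rewrite !mxE.
  case: (ltnP i K) => iK.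
    rewrite (bigD1 (Ordinal iK)) //= big1 ?addr0; last first.
      move=> k /negbTE hk; rewrite !mxE.
      by move: hk; rewrite -val_eqE /= eq_sym => ->; rewrite mul0r.
    rewrite !mxE eqxx /=; case: eqP => _; by rewrite ?mulr1 ?mulr0.
  rewrite hs // big1 ?if_same // => k _; rewrite !mxE.
  by rewrite ifN ?mul0r // neq_ltn (leq_trans (ltn_ord k) iK) orbT.
rewrite eAB; apply: leq_trans (mxrankM_maxl _ _) _.
apply: leq_trans (mxrankM_maxr _ _) _.
exact: leq_trans (mxrankM_maxl _ _) (rank_leq_col _).
Qed.

Lemma rdiag_scale {R : realType} {m n : nat} (U : 'M[R]_m) (V : 'M[R]_n)
   (s : 'I_m -> R) (a : R) :
  U *m rdiag n (fun i => a * s i) *m V^T = a *: (U *m rdiag n s *m V^T).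
Proof.
have -> : rdiag n (fun i => a * s i) = a *: rdiag n s.
  by apply/matrixP => i j; rewrite !mxE; case: ifP => _; rewrite ?mulr0.
by rewrite -scalemxAr -scalemxAl.
Qed.

Lemma rdiag_add {R : realType} {m n : nat} (U : 'M[R]_m) (V : 'M[R]_n)
   (s s' : 'I_m -> R) :
  U *m rdiag n s *m V^T + U *m rdiag n s' *m V^T = U *m rdiag n (fun i => s i + s' i) *m V^T.
Proof.
have -> : rdiag n (fun i => s i + s' i) = rdiag n s + rdiag n s'.
  by apply/matrixP => i j; rewrite !mxE; case: ifP => _; rewrite ?addr0.
by rewrite mulmxDr mulmxDl.
Qed.
Lemma ereal_id {R : realType} (y x : \bar R) (a b t : R) : 0 < t ->
  (((y + a%:E) - (x + b%:E)) * (t^-1)%:E = (y - x) * (t^-1)%:E + ((a - b) / t)%:E)%E.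
Proof.
move=> t0; have ti : 0 < t^-1 by rewrite invr_gt0.
case: x => [x| |]; case: y => [y| |] //=.
all: rewrite ?addNye ?addeNy ?addNye ?addeNy ?mulNyr //.
all: rewrite ?addye ?addey ?addye ?addey //.
all: rewrite ?gt0_mulye ?gt0_mulNye ?lte_fin //.
- rewrite -(EFinD y a) -(EFinD (y + a) (- (x + b))) -(EFinD y (- x)).
  rewrite -(EFinM (y + a - (x + b)) t^-1) -(EFinM (y - x) t^-1) -EFinD.
  congr EFin; rewrite -mulrDl; congr (_ * _); by rewrite opprD addrACA.
all: by rewrite gtr0_sg // mul1e addNye.
Qed.


Lemma lim_shift {R : realType} (q1 q2 : R -> \bar R) (l1 l2 a d : R) : 0 < d ->
  (forall t, 0 < t < d -> q2 t = (q1 t + a%:E)%E) ->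
  (q1 @ 0^'+ --> l1%:E)%E -> (q2 @ 0^'+ --> l2%:E)%E -> l2 = l1 + a.
Proof.
move=> d0 e c1 c2.
have c4 : ((fun t => q1 t + a%:E) @ 0^'+ --> (l1 + a)%:E)%E.
  by rewrite EFinD; apply: cvgeD => //; exact: cvg_cst.
have c3 : (q2 @ 0^'+ --> (l1 + a)%:E)%E.
  apply: cvg_trans c4; apply: near_eq_cvg; near=> t; rewrite e //; apply/andP; split.
  - by near: t; apply: nbhs_right_gt.
  - by near: t; apply: nbhs_right_lt.
have h := cvg_unique _ c2 c3.
have H : l2%:E = (l1 + a)%:E by apply: h; exact: ereal_hausdorff.
by case: H.
Unshelve. all: by end_near.
Qed.

Theorem mainTheorem14 (R : realType) (m n K : nat) (gamma Gamma : R)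
    (f : 'M[R]_(m, n) -> \bar R) (C : set 'M[R]_(m, n)) (Xs : 'M[R]_(m, n)) :
  (m <= n)%N -> (K < m)%N -> 0 < gamma ->
  C `<=` edom f ->
  (forall X, C X -> forall D, feas_cone C X D ->
     exists l : R, is_dirder (fun Y => (f Y + ind_set R C Y)%E) X D l) ->
  C Xs ->
  (forall D, feas_cone C Xs D ->
     exists2 l : R,
       is_dirder (fun Y => (f Y + (gamma * trunc_nuc K Y)%:E + ind_set R C Y)%E) Xs D l
       & 0 <= l) ->
  (forall X, C X -> exists U V,
     [/\ orthogonal_mx U, orthogonal_mx V,
         X = U *m rdiag n (sing_vals X) *m V^T &
         feas_cone C X
           (- (U *m rdiag n (fun i => if (K <= i)%N then sing_vals X i else 0)
                 *m V^T))]) ->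
  (forall D, feas_cone C Xs D -> nuc_norm D = 1 ->
     forall l : R, is_dirder (fun Y => (f Y + ind_set R C Y)%E) Xs D l -> l <= Gamma) ->
  gamma > Gamma ->
  trunc_nuc K Xs = 0 /\ (\rank Xs <= K)%N.
Proof.
move=> mn KM g0 Cdom hdd CXs hstat hC1 hC2 gG.
have [U [V [oU oV eXs hD0]]] := hC1 Xs CXs.
have := sv_svd mn U V (sing_vals Xs) oU oV; rewrite -eXs => -[U' [V' [_ _ s0 ss _]]].
set sig := sing_vals Xs in eXs hD0 s0 ss.
have eT : trunc_nuc K Xs = \sum_(i < m | (K <= i)%N) sig i by [].
have c0 : 0 <= trunc_nuc K Xs by rewrite eT; apply: sumr_ge0 => i _.
have [cz|cnz] := eqVneq (trunc_nuc K Xs) 0.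
  split => //; rewrite eXs; apply: (rank_rdiag mn) => i Ki.
  by move: cz; rewrite eT => /psumr_eq0P; apply.
exfalso.
set c := trunc_nuc K Xs in eT c0 cnz.
have cpos : 0 < c by rewrite lt_neqAle eq_sym cnz c0.
pose tl := fun i : 'I_m => if (K <= i)%N then sig i else 0.
have tl0 : forall i, 0 <= tl i by move=> i; rewrite /tl; case: ifP.
have stl : \sum_(i < m) tl i = c by rewrite eT [RHS]big_mkcond.
pose d := fun i : 'I_m => - c^-1 * tl i.
pose D1 := U *m rdiag n d *m V^T.
have eD1 : D1 = c^-1 *: (- (U *m rdiag n tl *m V^T)).
  by rewrite /D1 /d rdiag_scale scaleNr scalerN.
have [e e0 he] := hD0.
have feas1 : feas_cone C Xs D1.
  exists (e * c); first by rewrite mulr_gt0.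
  move=> t /andP [t0 te]; rewrite eD1 scalerA; apply: he.
  rewrite divr_gt0 //= ltr_pdivrMr //.
have nn1 : nuc_norm D1 = 1.
  rewrite /nuc_norm /D1 (sv_sum mn) //.
  rewrite (eq_bigr (fun i => c^-1 * tl i)); last first.
    by move=> i _; rewrite /d normrM normrN !ger0_norm // invr_ge0.
  by rewrite -mulr_sumr stl mulVf.
have [l1 hl1] := hdd Xs CXs D1 feas1.
have l1G := hC2 D1 feas1 nn1 l1 hl1.
have [l2 hl2 l2pos] := hstat D1 feas1.
have el : l2 = l1 + - gamma.
  apply: (@lim_shift R _ _ l1 l2 (- gamma) (Num.min (e * c) c) _ _ hl1 hl2).
    by rewrite lt_min cpos mulr_gt0.
  move=> t /andP [t0]; rewrite lt_min => /andP [tec tc].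
  have tc0 : 0 < 1 - t / c by rewrite subr_gt0 ltr_pdivrMr // mul1r.
  have CY : C (Xs + t *: D1).
    rewrite eD1 scalerA; apply: he.
    by rewrite divr_gt0 //= ltr_pdivrMr.
  have i1 : ind_set R C (Xs + t *: D1) = 0%E by rewrite /ind_set asboolT.
  have i2 : ind_set R C Xs = 0%E by rewrite /ind_set asboolT.
  pose v := fun i : 'I_m => if (K <= i)%N then (1 - t / c) * sig i else sig i.
  have ev : forall i, sig i + t * d i = v i.
    move=> i; rewrite /d /tl /v; case: ifP => _; last by rewrite mulr0 mulr0 addr0.
    by rewrite mulNr mulrN mulrA mulrBl mul1r.
  have eY : Xs + t *: D1 = U *m rdiag n v *m V^T.
    rewrite {1}eXs /D1 -rdiag_scale rdiag_add.
    by congr (_ *m rdiag n _ *m _); apply: funext => i; rewrite ev.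
  have v0 : forall i, 0 <= v i.
    by move=> i; rewrite /v; case: ifP => _ //; rewrite mulr_ge0 // ltW.
  have vs : forall i j : 'I_m, (i <= j)%N -> v j <= v i.
    move=> i j ij; rewrite /v; case: ifP => Kj; case: ifP => Ki.
    - by rewrite ler_pM2l // ss.
    - apply: le_trans (ss _ _ ij); apply: ler_piMl => //.
      by rewrite gerBl divr_ge0 // ltW.
    - by move: Kj; rewrite (leq_trans Ki ij).
    - exact: ss.
  have TY : trunc_nuc K (Xs + t *: D1) = c - t.
    rewrite /trunc_nuc eY.
    rewrite (eq_bigr (fun i => (1 - t / c) * sig i)); last first.
      by move=> i Ki; rewrite (sv_eq mn) // /v Ki.
    by rewrite -mulr_sumr -eT mulrBl mul1r mulfVK // gt_eqF.
  rewrite i1 i2 !adde0 TY -/c ereal_id //; congr (_ + _)%E; congr EFin.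
  by rewrite mulrBr addrAC subrr add0r mulNr mulfK // gt_eqF.
have : gamma <= l1 by move: l2pos; rewrite el subr_ge0.
by move=> h; have := le_trans h l1G; rewrite leNgt gG.
Qed.
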